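(* There is an absolute constant $c>0$ such that the following holds. Let $X,Y$ be a section-pair with $m$ chords and let $k\ge 1$ be an integer. Suppose that no vertex of $X\cup Y$ is incident to more than $\frac{m}{10k^2}$ chords. Then there is a collection of subsection pairs $X_1,Y_1;\dots;X_k,Y_k$ which is either parallel or interlacing, such that $e(X_i,Y_i)\ge c\,\frac{m}{k^4}$ for all $1\le i\le k$.
   Context: A section-pair in a graph $G$ is a pair $X,Y$ of vertex-disjoint paths; the two endpoints of $X$ are designated its top $x^{t}$ and bottom $x^{b}$, and those of $Y$ its top $y^t$ and bottom $y^b$. For distinct $x_1,x_2\in X$, $x_1$ is above $x_2$ if $x_1$ is closer to $x^t$ along $X$ than $x_2$, otherwise below; similarly in $Y$. For vertex sets $A,B\subseteq X$ (or $\subseteq Y$), $A$ is above (resp. below) $B$ if every vertex of $A$ is above (resp. below) every vertex of $B$. A chord is an edge of $G$ with one endpoint in $X$ and one in $Y$. A subsection pair of $X,Y$ is a section-pair $X',Y'$ where $X'$ is a subpath of $X$ and $Y'$ a subpath of $Y$ (tops being the endpoints closer to $x^t$, resp. $y^t$); $E(X',Y')$ is the set of chords with one endpoint in $X'$ and one in $Y'$, and $e(X',Y')=|E(X',Y')|$. A collection $X_1,Y_1;\dots;X_t,Y_t$ of subsection pairs, with the $X_i$ pairwise vertex-disjoint and the $Y_i$ pairwise vertex-disjoint, labeled so that $X_i$ is below $X_j$ for all $i<j$, is parallel if also $Y_i$ is below $Y_j$ for all $i<j$, and interlacing if $Y_i$ is above $Y_j$ for all $i<j$. *)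

(* Defs.v *)
From HB Require Import structures.
From mathcomp Require Import all_boot all_order all_algebra.
Set Implicit Arguments. Unset Strict Implicit. Unset Printing Implicit Defensive.

(* A graph G is a finite type V with a symmetric irreflexive adjacency e.
   A path is a nonempty duplicate-free sequence of vertices, consecutive
   ones adjacent; its head is the top and its last element the bottom. *)
Definition is_path (V : finType) (e : rel V) (P : seq V) : bool :=
  if P is x :: p then path e x p && uniq P else false.

Definition section_pair (V : finType) (e : rel V) (X Y : seq V) : bool :=
  [&& is_path e X, is_path e Y & [disjoint X & Y]].

(* X' is a subpath of X, oriented so that its top is the end closer to the
   top of X: a nonempty contiguous subsequence of X. *)
Definition subpath_of (V : finType) (X' X : seq V) : bool :=
  (X' != [::]) && infix X' X.

(* E(X',Y'): chords with one endpoint in X' and one in Y' (counted as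
   ordered pairs (x, y) with x in X', y in Y'; X', Y' are disjoint so each
   chord is counted once). *)
Definition chords (V : finType) (e : rel V) (X' Y' : seq V) : {set V * V} :=
  [set p : V * V | [&& p.1 \in X', p.2 \in Y' & e p.1 p.2]].

Definition nchords (V : finType) (e : rel V) (X' Y' : seq V) : nat :=
  #|chords e X' Y'|.

Definition chord_deg (V : finType) (e : rel V) (X Y : seq V) (v : V) : nat :=
  #|[set y in Y | (v \in X) && e v y]| + #|[set x in X | (v \in Y) && e x v]|.

(* Inside the path P, A is below B: every vertex of A is farther from the
   top of P than every vertex of B. *)
Definition below_in (V : eqType) (P A B : seq V) : bool :=
  all (fun a => all (fun b => index b P < index a P) B) A.

Definition collection (V : finType) (X Y : seq V) (k : nat)
    (Xs Ys : 'I_k -> seq V) : Prop :=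
  [/\ forall i, subpath_of (Xs i) X,
      forall i, subpath_of (Ys i) Y,
      forall i j, i != j -> [disjoint Xs i & Xs j],
      forall i j, i != j -> [disjoint Ys i & Ys j] &
      forall i j : 'I_k, i < j -> below_in X (Xs i) (Xs j)].

Definition parallel (V : finType) (Y : seq V) (k : nat)
    (Ys : 'I_k -> seq V) : Prop :=
  forall i j : 'I_k, i < j -> below_in Y (Ys i) (Ys j).

Definition interlacing (V : finType) (Y : seq V) (k : nat)
    (Ys : 'I_k -> seq V) : Prop :=
  forall i j : 'I_k, i < j -> below_in Y (Ys j) (Ys i).

(* Main.v *)
Require Import Defs.
From HB Require Import structures.
From mathcomp Require Import all_boot all_order all_algebra.
From mathcomp Require Import zify.
Set Implicit Arguments. Unset Strict Implicit. Unset Printing Implicit Defensive.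

Definition blk (m t n : nat) := minn (n * t %/ m) t.-1.

Lemma blk_lt m t n : 0 < t -> blk m t n < t.
Proof. move=> ht; rewrite /blk; apply: leq_ltn_trans (geq_minr _ _) _; lia. Qed.

Lemma blk_mono m t a b : a <= b -> blk m t a <= blk m t b.
Proof.
move=> hab; rewrite /blk; have h : a * t %/ m <= b * t %/ m.
  by apply: leq_div2r; rewrite leq_mul2r hab orbT.
lia.
Qed.

Lemma blk_gap m t a c : 0 < m -> a <= c -> c <= m -> blk m t a = blk m t c ->
  (c - a) * t <= m.
Proof.
move=> hm hac hcm; rewrite /blk.
have ea := divn_eq (a * t) m; have ec := divn_eq (c * t) m.
have ra := ltn_pmod (a * t) hm; have rc := ltn_pmod (c * t) hm.
have hq : a * t %/ m <= c * t %/ m by apply: leq_div2r; rewrite leq_mul2r hac orbT.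
have hct : c * t %/ m <= t.
  apply: leq_trans (_ : m * t %/ m <= t); first by apply: leq_div2r; rewrite leq_mul2r hcm orbT.
  by rewrite mulKn.
move: ea ec ra rc hq hct.
set qa := a * t %/ m; set qc := c * t %/ m; set ra := a * t %% m; set rc := c * t %% m.
move=> ea ec hra hrc hq hct hmin.
rewrite mulnBl.
case: (leqP qc t.-1) => h1.
- have eq : qa = qc by lia.
  rewrite ea ec eq; lia.
- have eqc : qc = t by lia.
  have hqa : t.-1 <= qa by lia.
  have h2 : c * t <= m * t by rewrite leq_mul2r hcm orbT.
  have h3 : t.-1 * m <= a * t by rewrite ea; apply: leq_trans (leq_addr _ _); rewrite leq_mul2r hqa orbT.
  have : m * t - t.-1 * m <= m.
    have gen : forall u, m * u - u.-1 * m <= m.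
      by case=> [|u] //=; lia.
    exact: gen.
  lia.
Qed.

Definition Pc (T : finType) (S : {set T}) (pos : T -> nat) i :=
  #|[set x in S | pos x < i]|.
Definition bmap (T : finType) (S : {set T}) (pos : T -> nat) t i :=
  blk #|S| t (Pc S pos i).

Lemma Pc_mono (T : finType) (S : {set T}) pos i j : i <= j -> Pc S pos i <= Pc S pos j.
Proof.
move=> hij; apply: subset_leq_card; apply/subsetP=> x; rewrite !inE => /andP[-> h] /=.
exact: leq_trans h hij.
Qed.

Lemma Pc_le (T : finType) (S : {set T}) pos i : Pc S pos i <= #|S|.
Proof. by apply: subset_leq_card; apply/subsetP=> x; rewrite !inE => /andP[]. Qed.

Lemma bmap_mono (T : finType) (S : {set T}) pos t i j :
  i <= j -> bmap S pos t i <= bmap S pos t j.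
Proof. by move=> h; apply: blk_mono; apply: Pc_mono. Qed.

Lemma Pc_split (T : finType) (S : {set T}) pos lo hi : lo <= hi ->
  #|[set x in S | lo <= pos x < hi]| = Pc S pos hi - Pc S pos lo.
Proof.
move=> h; rewrite /Pc -(cardsID [set x in S | pos x < lo] [set x in S | pos x < hi]).
have -> : [set x in S | pos x < hi] :&: [set x in S | pos x < lo] = [set x in S | pos x < lo].
  apply/setP=> x; rewrite !inE; case: (x \in S) => //=.
  case: (ltnP (pos x) lo) => hx; rewrite ?andbF ?andbT //; exact: leq_trans hx h.
have -> : [set x in S | pos x < hi] :\: [set x in S | pos x < lo] = [set x in S | lo <= pos x < hi].
  apply/setP=> x; rewrite !inE; case: (x \in S); rewrite ?andbF //=.
  by case: (ltnP (pos x) lo).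
by rewrite addKn.
Qed.

Lemma block_mass (T : finType) (S : {set T}) pos t b : 0 < #|S| ->
  (forall i, t * #|[set x in S | pos x == i]| <= #|S|) ->
  t * #|[set x in S | bmap S pos t (pos x) == b]| <= 2 * #|S|.
Proof.
move=> hm hdeg.
set A := [set x in S | _].
case: (set_0Vmem A) => [->|[x0 hx0]]; first by rewrite cards0 muln0.
have [xl hxl hmin] := @arg_minnP _ x0 (fun x => x \in A) pos hx0.
have [xh hxh hmax] := @arg_maxnP _ x0 (fun x => x \in A) pos hx0.
have hlh : pos xl <= pos xh by apply: hmin.
have hsub : A \subset [set x in S | pos xl <= pos x < pos xh] :|: [set x in S | pos x == pos xh].
  apply/subsetP=> x hx; move: (hx); rewrite !inE => /andP[-> _] /=.
  have h1 := hmin x hx; have h2 := hmax x hx.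
  by rewrite h1 /= orbC -leq_eqVlt.
have hc := subset_leq_card hsub.
have hU := cardsU [set x in S | pos xl <= pos x < pos xh] [set x in S | pos x == pos xh].
rewrite Pc_split // in hU.
have hgap : (Pc S pos (pos xh) - Pc S pos (pos xl)) * t <= #|S|.
  apply: blk_gap => //; [exact: Pc_mono | exact: Pc_le |].
  move: hxl hxh; rewrite !inE /bmap => /andP[_ /eqP ->] /andP[_ /eqP ->] //.
have hd := hdeg (pos xh).
have : #|A| <= (Pc S pos (pos xh) - Pc S pos (pos xl)) + #|[set x in S | pos x == pos xh]| by lia.
move=> h; apply: leq_trans (leq_mul (leqnn t) h) _; rewrite mulnDr; lia.
Qed.

Definition chainb (C : finType) (H : pred C) (R : rel C) n (a : C) : bool :=
  [exists f : {ffun 'I_n.+1 -> C},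
    [&& [forall i : 'I_n.+1, H (f i)], [forall i : 'I_n.+1, forall j : 'I_n.+1, (i < j) ==> R (f i) (f j)]
      & f ord_max == a]].

Definition height (C : finType) (H : pred C) (R : rel C) k (a : C) :=
  \max_(n < k | chainb H R n a) n.

Section Ht.
Variables (C : finType) (H : pred C) (R : rel C) (k : nat).
Hypothesis k_gt0 : 0 < k.
Hypothesis trR : transitive R.

Lemma height_lt a : height H R k a < k.
Proof.
have : height H R k a <= k.-1.
  by apply/bigmax_leqP => n _; rewrite -ltnS prednK.
by case: k k_gt0 => // k0 _.
Qed.

Lemma chain0 a : H a -> chainb H R 0 a.
Proof.
move=> ha; apply/existsP; exists [ffun _ => a]; rewrite !ffunE eqxx andbT.
apply/andP; split; first by apply/forallP=> i; rewrite ffunE.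
by apply/forallP=> i; apply/forallP=> j; rewrite !ord1.
Qed.

Lemma chain_ext n a b : chainb H R n a -> H b -> R a b -> chainb H R n.+1 b.
Proof.
move=> /existsP[f /and3P[/forallP hH /forallP hR /eqP ha]] hb hab.
apply/existsP; exists [ffun i : 'I_n.+2 => if i < n.+1 then f (inord i) else b].
rewrite !ffunE ltnn eqxx andbT; apply/andP; split.
  by apply/forallP=> i; rewrite ffunE; case: ifP.
have hfa : forall i : 'I_n.+1, R (f i) b.
  move=> i; case: (ltnP i n) => hi.
    apply: trR hab; rewrite -ha; have := hR i => /forallP /(_ ord_max) /implyP; apply.
    exact: hi.
  have -> : i = ord_max by apply/val_inj => /=; move: (ltn_ord i); lia.
  by rewrite ha.
apply/forallP=> i; apply/forallP=> j; apply/implyP=> hij; rewrite !ffunE.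
have hi : i < n.+1 by move: (ltn_ord j); lia.
rewrite hi; case: ifP => hj.
  have := hR (inord i) => /forallP /(_ (inord j)) /implyP; apply.
  by rewrite !inordK.
exact: hfa.
Qed.

Lemma height_spec a : H a -> chainb H R (height H R k a) a.
Proof.
move=> ha.
have hA : 0 < #|[pred n : 'I_k | chainb H R n a]|.
  apply/card_gt0P; exists (Ordinal k_gt0); rewrite inE /=; exact: chain0.
have [n0 hn0 heq] := eq_bigmax_cond (fun n : 'I_k => nat_of_ord n) hA.
rewrite /height; move: heq; rewrite /= => heq.
have -> : \max_(n < k | chainb H R n a) n = n0.
  rewrite -heq; apply: eq_bigl => n; by rewrite inE.
by move: hn0; rewrite inE.
Qed.

Lemma height_inc a b : H a -> H b -> R a b -> ~~ chainb H R k.-1 a ->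
  height H R k a < height H R k b.
Proof.
move=> ha hb hab hnc.
have hs := height_spec ha.
have he := chain_ext hs hb hab.
have hlt := height_lt a.
have hne : height H R k a != k.-1 by apply/eqP=> e; rewrite -e hs in hnc.
have hlt2 : (height H R k a).+1 < k by move: hlt hne; case: (k) => //; lia.
exact: (@leq_bigmax_cond _ (fun n : 'I_k => chainb H R n b) (fun n : 'I_k => nat_of_ord n) (Ordinal hlt2) he).
Qed.
End Ht.

Lemma sum_fiber (T C : finType) (S : {set T}) (cell : T -> C) (Q : pred C) :
  \sum_(c | Q c) #|[set x in S | cell x == c]| = #|[set x in S | Q (cell x)]|.
Proof.
rewrite -sum1_card (partition_big cell Q) /=; last by move=> x; rewrite inE => /andP[].
apply: eq_bigr => c hc; rewrite -sum1_card; apply: eq_bigl => x; rewrite !inE.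
case: (x \in S) => //=; case: eqP => [->|] /=; by rewrite ?hc ?andbF ?andbT.
Qed.

Lemma sum_le_union (C : finType) (P Q1 Q2 : pred C) (w : C -> nat) :
  (forall c, P c -> Q1 c || Q2 c) ->
  \sum_(c | P c) w c <= \sum_(c | Q1 c) w c + \sum_(c | Q2 c) w c.
Proof.
move=> h; rewrite [X in _ <= X + _]big_mkcond [X in _ <= _ + X]big_mkcond -big_split /=.
rewrite big_mkcond; apply: leq_sum => c _.
case: ifP => // /h; case: (Q1 c); case: (Q2 c) => //= _; exact: leq_addr.
Qed.

Definition posr p q (x : 'I_p * 'I_q) : nat := x.1.
Definition posc p q (x : 'I_p * 'I_q) : nat := x.2.

Definition incr t (a b : 'I_t * 'I_t) := (a.1 < b.1) && (a.2 < b.2).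
Definition decr t (a b : 'I_t * 'I_t) := (a.1 < b.1) && (b.2 < a.2).

Lemma incr_trans t : transitive (@incr t).
Proof. move=> b a c /andP[h1 h2] /andP[h3 h4]; apply/andP; split; lia. Qed.
Lemma decr_trans t : transitive (@decr t).
Proof. move=> b a c /andP[h1 h2] /andP[h3 h4]; apply/andP; split; lia. Qed.

Section Core.
Variables (p q k' : nat) (S : {set 'I_p * 'I_q}).
Hypothesis m_gt0 : 0 < #|S|.
Hypothesis hrow : forall i : nat, 10 * k'.+1 ^ 2 * #|[set x in S | posr x == i]| <= #|S|.
Hypothesis hcol : forall j : nat, 10 * k'.+1 ^ 2 * #|[set x in S | posc x == j]| <= #|S|.

Local Notation t := (10 * k'.+1 ^ 2).
Lemma t_gt0 : 0 < t. Proof. by rewrite muln_gt0 expn_gt0. Qed.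

Definition cell (x : 'I_p * 'I_q) : 'I_t * 'I_t :=
  (Ordinal (@blk_lt #|S| t (Pc S (@posr p q) (posr x)) t_gt0),
   Ordinal (@blk_lt #|S| t (Pc S (@posc p q) (posc x)) t_gt0)).

Definition wt c := #|[set x in S | cell x == c]|.
Definition heavy c := #|S| <= 2 * t ^ 2 * wt c.

Lemma cell_eq x c : (cell x == c) =
  (bmap S (@posr p q) t (posr x) == c.1) && (bmap S (@posc p q) t (posc x) == c.2).
Proof. by case: c => [c1 c2]; rewrite /cell xpair_eqE. Qed.

Lemma row_mass (b : 'I_t) : t * \sum_(c | c.1 == b) wt c <= 2 * #|S|.
Proof.
rewrite /wt sum_fiber.
have -> : [set x in S | (cell x).1 == b] = [set x in S | bmap S (@posr p q) t (posr x) == b].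
  by apply/setP=> x; rewrite !inE.
exact: block_mass.
Qed.

Lemma col_mass (b : 'I_t) : t * \sum_(c | c.2 == b) wt c <= 2 * #|S|.
Proof.
rewrite /wt sum_fiber.
have -> : [set x in S | (cell x).2 == b] = [set x in S | bmap S (@posc p q) t (posc x) == b].
  by apply/setP=> x; rewrite !inE.
exact: block_mass.
Qed.

Lemma k_gt0 : 0 < k'.+1. Proof. by []. Qed.

Definition gfib (c : 'I_t * 'I_t) : 'I_k'.+1 * 'I_k'.+1 :=
  (Ordinal (height_lt heavy (@incr t) k_gt0 c), Ordinal (height_lt heavy (@decr t) k_gt0 c)).

Lemma no_chain_contra :
  (forall a, ~~ chainb heavy (@incr t) k' a) ->
  (forall a, ~~ chainb heavy (@decr t) k' a) -> False.
Proof.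
move=> ni nd.
have fib : forall a c, heavy a -> heavy c -> gfib a = gfib c -> (c.1 == a.1) || (c.2 == a.2).
  move=> a c ha hc /eqP; rewrite /gfib xpair_eqE => /andP[/eqP e1 /eqP e2].
  have [e1' e2'] : height heavy (@incr t) k'.+1 a = height heavy (@incr t) k'.+1 c /\
     height heavy (@decr t) k'.+1 a = height heavy (@decr t) k'.+1 c.
    by move: e1 e2 => [->] [->].
  case: (ltngtP c.1 a.1) => h1; last by apply/orP; left; apply/eqP; apply: val_inj.
  1,2: case: (ltngtP c.2 a.2) => h2; last by apply/orP; right; apply/eqP; apply: val_inj.
  - have := height_inc k_gt0 (@incr_trans t) hc ha (introT andP (conj h1 h2)) (ni c); lia.
  - have := height_inc k_gt0 (@decr_trans t) hc ha (introT andP (conj h1 h2)) (nd c); lia.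
  - have := height_inc k_gt0 (@decr_trans t) ha hc (introT andP (conj h1 h2)) (nd a); lia.
  - have := height_inc k_gt0 (@incr_trans t) ha hc (introT andP (conj h1 h2)) (ni a); lia.
set hv := \sum_(c | heavy c) wt c.
set lt := \sum_(c | ~~ heavy c) wt c.
have hm : #|S| = hv + lt.
  have -> : hv + lt = \sum_c wt c by rewrite [RHS](bigID heavy).
  rewrite /wt (sum_fiber S cell predT).
  by apply: eq_card => x; rewrite !inE andbT.
have hl : 2 * t ^ 2 * lt <= t * t * #|S|.
  rewrite /lt big_distrr /=.
  apply: leq_trans (_ : \sum_(c | ~~ heavy c) #|S| <= _).
    by apply: leq_sum => c; rewrite /heavy -ltnNge => /ltnW.
  rewrite sum_nat_const; apply: leq_mul => //.
  apply: leq_trans (max_card _) _; by rewrite card_prod card_ord.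
have hh : t * hv <= k'.+1 * k'.+1 * (4 * #|S|).
  rewrite /hv (partition_big gfib predT) //= big_distrr /=.
  apply: leq_trans (_ : \sum_(u : 'I_k'.+1 * 'I_k'.+1) 4 * #|S| <= _).
    apply: leq_sum => u _.
    case: (pickP (fun c => heavy c && (gfib c == u))) => [a0 /andP[ha0 /eqP hga0] | hnone].
      have := @sum_le_union _ (fun c => heavy c && (gfib c == u)) (fun c => c.1 == a0.1)
        (fun c => c.2 == a0.2) wt.
      move=> /(_ _) h.
      have h' : \sum_(c | heavy c && (gfib c == u)) wt c <=
          \sum_(c | c.1 == a0.1) wt c + \sum_(c | c.2 == a0.2) wt c.
        apply: h => c /andP[hc /eqP hgc]; apply: fib => //; by rewrite hga0 hgc.
      apply: leq_trans (leq_mul (leqnn t) h') _.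
      rewrite mulnDr; have := row_mass a0.1; have := col_mass a0.2; lia.
    by rewrite (eq_bigl _ _ hnone) big_pred0_eq muln0.
  by rewrite sum_nat_const card_prod card_ord.
have tk : t = 10 * (k'.+1 * k'.+1) by rewrite mulnn.
have kk : 0 < k'.+1 * k'.+1 by [].
move: hh hl; rewrite tk => hh hl.
set K := k'.+1 * k'.+1 in hh hl kk.
have hh' : 10 * hv <= 4 * #|S|.
  have : K * (10 * hv) <= K * (4 * #|S|) by rewrite mulnCA mulnA.
  by rewrite leq_pmul2l.
have hl' : 2 * lt <= #|S|.
  have : (10 * K) * (10 * K) * (2 * lt) <= (10 * K) * (10 * K) * #|S|.
    by move: hl; rewrite -mulnn [2 * _]mulnC -mulnA.
  rewrite leq_pmul2l //; lia.
lia.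
Qed.

Lemma core_exists : exists f : 'I_k'.+1 -> 'I_t * 'I_t,
  (forall i, heavy (f i)) /\
  ((forall i j : 'I_k'.+1, i < j -> incr (f i) (f j)) \/
   (forall i j : 'I_k'.+1, i < j -> decr (f i) (f j))).
Proof.
case: (boolP [exists a, chainb heavy (@incr t) k' a]) =>
  [/existsP[a /existsP[f /and3P[/forallP hH /forallP hR _]]]|ni].
  exists f; split => //; left => i j hij; exact: (implyP (forallP (hR i) j) hij).
case: (boolP [exists a, chainb heavy (@decr t) k' a]) =>
  [/existsP[a /existsP[f /and3P[/forallP hH /forallP hR _]]]|nd].
  exists f; split => //; right => i j hij; exact: (implyP (forallP (hR i) j) hij).
exfalso; apply: no_chain_contra => a; [move: ni | move: nd];
  rewrite negb_exists => /forallP; apply.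
Qed.
End Core.

Definition slice (T : Type) (X : seq T) lo hi := take (hi - lo) (drop lo X).

Lemma infix_slice (T : eqType) (X : seq T) lo hi : infix (slice X lo hi) X.
Proof.
rewrite /slice -{2}(cat_take_drop lo X) -{2}(cat_take_drop (hi - lo) (drop lo X)).
exact: infix_infix.
Qed.

Lemma mem_slice (T : eqType) (X : seq T) lo hi x : uniq X ->
  (x \in slice X lo hi) = (x \in X) && (lo <= index x X < hi).
Proof.
move=> uX; apply/idP/idP.
  move/(nthP x) => [j hj <-].
  have hs : size (slice X lo hi) = minn (hi - lo) (size X - lo) by rewrite /slice size_take_min size_drop.
  rewrite hs in hj.
  have hj1 : j < hi - lo by move: hj; lia.
  have hj2 : lo + j < size X by move: hj; lia.
  rewrite /slice nth_take // nth_drop mem_nth //= index_uniq //; lia.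
move=> /andP[hx /andP[h1 h2]]; apply/(nthP x).
have hx' := hx; have hix := index_mem x X; rewrite -hix in hx'.
have hs : size (slice X lo hi) = minn (hi - lo) (size X - lo) by rewrite /slice size_take_min size_drop.
exists (index x X - lo); first by rewrite hs; move: hx'; lia.
rewrite /slice nth_take; last by lia.
rewrite nth_drop subnKC //; exact: nth_index hx.
Qed.

Lemma count_down (Q : pred nat) n i : (forall a b, a <= b -> Q b -> Q a) -> i < n ->
  (i < count Q (iota 0 n)) = Q i.
Proof.
move=> hQ hin; case: (boolP (Q i)) => hq.
  have -> : n = i.+1 + (n - i.+1) by lia.
  rewrite iotaD count_cat.
  have -> : count Q (iota 0 i.+1) = i.+1.
    rewrite -[in RHS](size_iota 0 i.+1) -count_predT; apply: eq_in_count => j.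
    rewrite mem_iota add0n /= => hj; apply: hQ hq; lia.
  exact: leq_addr.
have -> : n = i + (n - i) by lia.
rewrite iotaD count_cat.
have -> : count Q (iota (0 + i) (n - i)) = 0.
  apply/eqP; rewrite -leqn0 leqNgt -has_count; apply/hasPn => j.
  rewrite mem_iota add0n => /andP[hj _]; apply: contra hq; exact: hQ.
rewrite addn0; apply/negbTE; rewrite -leqNgt; apply: leq_trans (count_size _ _) _; by rewrite size_iota.
Qed.

Definition blo (bm : nat -> nat) n b := count (fun j => bm j < b) (iota 0 n).

Lemma blo_spec (bm : nat -> nat) n b i : {homo bm : a b / a <= b} -> i < n ->
  (blo bm n b <= i < blo bm n b.+1) = (bm i == b).
Proof.
move=> hm hin; rewrite /blo leqNgt !count_down //.
- by rewrite ltnS; case: ltngtP.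
- move=> a c hac; move/(hm _ _) : hac; lia.
- move=> a c hac; move/(hm _ _) : hac; lia.
Qed.

Lemma mem_block (T : eqType) (X : seq T) bm b u : uniq X -> {homo bm : a b / a <= b} ->
  (u \in slice X (blo bm (size X) b) (blo bm (size X) b.+1)) = (u \in X) && (bm (index u X) == b).
Proof.
move=> uX hm; rewrite mem_slice //; case hu: (u \in X) => //=.
by rewrite blo_spec // index_mem.
Qed.

Section Iface.
Variables (V : finType) (e : rel V) (X Y : seq V) (x0 : V).
Hypotheses (uX : uniq X) (uY : uniq Y).
Local Notation p := (size X).
Local Notation q := (size Y).

Definition Sch : {set 'I_p * 'I_q} := [set x : 'I_p * 'I_q | e (nth x0 X x.1) (nth x0 Y x.2)].
Definition Fm (x : 'I_p * 'I_q) := (nth x0 X x.1, nth x0 Y x.2).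

Lemma Fm_inj : injective Fm.
Proof.
move=> [a b] [c d] /= [h1 h2].
have e1 : a = c by apply: val_inj; apply/eqP; rewrite -(nth_uniq x0 (ltn_ord a) (ltn_ord c) uX) h1.
have e2 : b = d by apply: val_inj; apply/eqP; rewrite -(nth_uniq x0 (ltn_ord b) (ltn_ord d) uY) h2.
by rewrite e1 e2.
Qed.

Lemma card_Sch : #|Sch| = nchords e X Y.
Proof.
rewrite /nchords -(card_in_imset (f := Fm) (D := Sch)); last by move=> a b _ _; exact: Fm_inj.
suff -> : chords e X Y = Fm @: Sch by [].
apply/setP => [[u v]]; rewrite /chords !inE /=; apply/idP/imsetP; last first.
  move=> [[a b]]; rewrite inE /= => he [-> ->].
  by rewrite !mem_nth // he.
move=> /and3P[hu hv he].
have hu' : index u X < p by rewrite index_mem.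
have hv' : index v Y < q by rewrite index_mem.
exists (Ordinal hu', Ordinal hv').
  by rewrite !inE /= ?hu ?hv ?nth_index.
by rewrite /Fm /= !nth_index.
Qed.

Lemma row_deg k0 :
  (forall v, v \in X ++ Y -> 10 * k0 ^ 2 * chord_deg e X Y v <= nchords e X Y) ->
  forall i : nat, 10 * k0 ^ 2 * #|[set x in Sch | posr x == i]| <= #|Sch|.
Proof.
move=> hdeg i; rewrite card_Sch.
case: (ltnP i p) => hi; last first.
  suff -> : [set x in Sch | posr x == i] = set0 by rewrite cards0 muln0.
  apply/setP=> x; rewrite !inE /posr; apply/negbTE; apply/negP => /andP[_ /eqP hx].
  by move: (ltn_ord x.1); rewrite hx ltnNge hi.
apply: leq_trans (hdeg (nth x0 X i) _); last by rewrite mem_cat mem_nth.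
rewrite leq_mul2l; apply/orP; right.
rewrite /chord_deg; apply: leq_trans (leq_addr _ _).
set A := [set x in Sch | _].
rewrite -(card_in_imset (f := fun x : 'I_p * 'I_q => nth x0 Y x.2) (D := A)).
  apply: subset_leq_card; apply/subsetP => y /imsetP[x hx ->]; move: hx.
  rewrite !inE /posr => /andP[he /eqP hxi].
  by rewrite mem_nth //= -hxi mem_nth.
move=> a b; rewrite !inE /posr => /andP[_ /eqP ha] /andP[_ /eqP hb] hab.
by apply: Fm_inj; rewrite /Fm hab ha hb.
Qed.

Lemma col_deg k0 :
  (forall v, v \in X ++ Y -> 10 * k0 ^ 2 * chord_deg e X Y v <= nchords e X Y) ->
  forall j : nat, 10 * k0 ^ 2 * #|[set x in Sch | posc x == j]| <= #|Sch|.
Proof.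
move=> hdeg j; rewrite card_Sch.
case: (ltnP j q) => hj; last first.
  suff -> : [set x in Sch | posc x == j] = set0 by rewrite cards0 muln0.
  apply/setP=> x; rewrite !inE /posc; apply/negbTE; apply/negP => /andP[_ /eqP hx].
  by move: (ltn_ord x.2); rewrite hx ltnNge hj.
apply: leq_trans (hdeg (nth x0 Y j) _); last by rewrite mem_cat mem_nth ?orbT.
rewrite leq_mul2l; apply/orP; right.
rewrite /chord_deg; apply: leq_trans (leq_addl _ _).
set A := [set x in Sch | _].
rewrite -(card_in_imset (f := fun x : 'I_p * 'I_q => nth x0 X x.1) (D := A)).
  apply: subset_leq_card; apply/subsetP => y /imsetP[x hx ->]; move: hx.
  rewrite !inE /posc => /andP[he /eqP hxj].
  by rewrite mem_nth //= -hxj mem_nth.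
move=> a b; rewrite !inE /posc => /andP[_ /eqP ha] /andP[_ /eqP hb] hab.
by apply: Fm_inj; rewrite /Fm hab ha hb.
Qed.
End Iface.

Section Blocks2.
Variables (T : finType) (Z : seq T) (bm : nat -> nat).
Hypotheses (uZ : uniq Z) (hm : {homo bm : a b / a <= b}).
Local Notation blk b := (slice Z (blo bm (size Z) b) (blo bm (size Z) b.+1)).

Lemma below_blocks b1 b2 : b2 < b1 -> below_in Z (blk b1) (blk b2).
Proof.
move=> hb; apply/allP => a; rewrite mem_block // => /andP[_ /eqP ha].
apply/allP => b; rewrite mem_block // => /andP[_ /eqP hb'].
rewrite ltnNge; apply/negP => hab; have := hm hab; lia.
Qed.

Lemma disj_blocks b1 b2 : b1 != b2 -> [disjoint blk b1 & blk b2].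
Proof.
move=> hne; rewrite disjoint_has; apply/hasPn => u; rewrite /= !mem_block //.
move=> /andP[_ /eqP h1]; apply/negP => /andP[_ /eqP h2]; move: hne; by rewrite -h1 -h2 eqxx.
Qed.

Lemma blk_nonempty b u : u \in blk b -> subpath_of (blk b) Z.
Proof.
move=> hu; rewrite /subpath_of infix_slice andbT; apply/eqP => h; by rewrite h in hu.
Qed.
End Blocks2.
Import Order.TTheory GRing.Theory Num.Theory.

Theorem lemma4p1 :
  exists c : rat, (0 < c)%R /\
  forall (V : finType) (e : rel V), symmetric e -> irreflexive e ->
  forall (X Y : seq V) (k : nat),
    section_pair e X Y -> (1 <= k)%N ->
    let m := nchords e X Y in
    (0 < m)%N ->
    (forall v, v \in X ++ Y -> (10 * k ^ 2 * chord_deg e X Y v <= m)%N) ->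
    exists Xs Ys : 'I_k -> seq V,
      [/\ collection X Y Xs Ys,
          parallel Y Ys \/ interlacing Y Ys &
          forall i : 'I_k,
            (c * (m%:R / (k ^ 4)%:R) <= (nchords e (Xs i) (Ys i))%:R)%R].
Proof.
exists (200%:R)^-1%R; split; first by rewrite invr_gt0 ltr0n.
move=> V e _ _ X Y k hsp hk m hm hdeg.
case: k hk hdeg => // k' _ hdeg.
move: hsp; rewrite /section_pair => /and3P[pX pY _].
have uX : uniq X by move: pX; case: (X) => // a s /andP[].
have uY : uniq Y by move: pY; case: (Y) => // a s /andP[].
have [x0 _] : exists x0 : V, x0 \in X by move: pX; case: (X) => // a s _; exists a; rewrite inE eqxx.
set S := Sch e X Y x0.
have hS : #|S| = m by rewrite /S card_Sch.
have hr := row_deg (e:=e) x0 uX uY hdeg.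
have hc := col_deg (e:=e) x0 uX uY hdeg.
have hS0 : 0 < #|S| by rewrite hS.
have [f [hH hord]] := core_exists hS0 hr hc.
set t := 10 * k'.+1 ^ 2.
set bmr := bmap S (@posr (size X) (size Y)) t.
set bmc := bmap S (@posc (size X) (size Y)) t.
have hmr : {homo bmr : a b / a <= b} by move=> a b h; apply: bmap_mono.
have hmc : {homo bmc : a b / a <= b} by move=> a b h; apply: bmap_mono.
pose r i := f (rev_ord i).
pose Xs i := slice X (blo bmr (size X) (r i).1) (blo bmr (size X) (r i).1.+1).
pose Ys i := slice Y (blo bmc (size Y) (r i).2) (blo bmc (size Y) (r i).2.+1).
have hcellX : forall i x, x \in S -> cell k' S x == r i -> nth x0 X x.1 \in Xs i.
  move=> i x _ hx; rewrite /Xs mem_block // mem_nth //= index_uniq //.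
  by move: hx; rewrite cell_eq => /andP[].
have hcellY : forall i x, x \in S -> cell k' S x == r i -> nth x0 Y x.2 \in Ys i.
  move=> i x _ hx; rewrite /Ys mem_block // mem_nth //= index_uniq //.
  by move: hx; rewrite cell_eq => /andP[].
have hwt : forall i, 0 < wt S (r i).
  move=> i; have := hH (rev_ord i); rewrite /heavy -/(r i) => h.
  rewrite lt0n; apply/eqP => h0; move: h; rewrite h0 muln0; lia.
have hex : forall i, exists2 x, x \in S & cell k' S x == r i.
  move=> i; have := hwt i; rewrite /wt => /card_gt0P[x]; rewrite inE => /andP[h1 h2].
  by exists x.
have hrev : forall i j : 'I_k'.+1, i < j -> rev_ord j < rev_ord i.
  move=> i j hij; rewrite /=; have := ltn_ord j; lia.
have ord1 : forall i j : 'I_k'.+1, i < j -> (r j).1 < (r i).1.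
  move=> i j /hrev hij; case: hord => h; by case/andP: (h _ _ hij).
have ord2 : forall i j : 'I_k'.+1, i < j -> (r j).2 != (r i).2.
  move=> i j /hrev hij; case: hord => h; case/andP: (h _ _ hij) => _ h2;
  by apply/eqP => e2; move: h2; rewrite /r e2 ltnn.
exists Xs, Ys; split.
- split.
  + move=> i; have [x hx hxc] := hex i; exact: blk_nonempty (hcellX i x hx hxc).
  + move=> i; have [x hx hxc] := hex i; exact: blk_nonempty (hcellY i x hx hxc).
  + move=> i j hij; apply: disj_blocks => //.
    case: (ltngtP i j) => h.
    * by have := ord1 _ _ h; case: ltngtP.
    * by have := ord1 _ _ h; case: ltngtP.
    * have e0 : i = j by apply: val_inj.
      by move: hij; rewrite e0 eqxx.
  + move=> i j hij; apply: disj_blocks => //.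
    case: (ltngtP i j) => h.
    * by rewrite eq_sym; exact: (ord2 _ _ h).
    * exact: (ord2 _ _ h).
    * have e0 : i = j by apply: val_inj.
      by move: hij; rewrite e0 eqxx.
  + move=> i j hij; apply: (below_blocks uX hmr); exact: ord1.
- case: hord => h; [left|right] => i j /hrev hij; have /andP[_ h2] := h _ _ hij.
  + by apply: below_blocks.
  + by apply: below_blocks.
- move=> i.
  have hN : wt S (r i) <= nchords e (Xs i) (Ys i).
    rewrite /wt /nchords -(card_in_imset (f := @Fm V X Y x0) (D := [set x in S | cell k' S x == r i])).
      apply: subset_leq_card; apply/subsetP => z /imsetP[x hx ->]; move: hx.
      rewrite inE => /andP[hxS hxc]; rewrite /chords inE /= hcellX // hcellY //=.
      by move: hxS; rewrite inE.
    by move=> a b _ _; apply: Fm_inj.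
  have hH' := hH (rev_ord i); rewrite /heavy -/(r i) in hH'.
  have e200 : 2 * (10 * k'.+1 ^ 2) ^ 2 = 200 * k'.+1 ^ 4 by rewrite expnMn -expnM mulnA.
  rewrite e200 hS in hH'.
  have hmN : m <= 200 * k'.+1 ^ 4 * nchords e (Xs i) (Ys i).
    apply: leq_trans hH' _; by rewrite leq_mul2l hN orbT.
  set N := nchords e (Xs i) (Ys i) in hmN *.
  have hK : (0 < (k'.+1 ^ 4)%:R :> rat)%R by rewrite ltr0n expn_gt0.
  set K := ((k'.+1 ^ 4)%:R : rat) in hK *.
  have hmR : (m%:R <= 200%:R * K * N%:R :> rat)%R by rewrite /K -!natrM ler_nat.
  set y := (m%:R / K)%R.
  have hy : (y * K = m%:R)%R by rewrite /y divfK // gt_eqF.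
  have hy2 : (y <= 200%:R * N%:R :> rat)%R.
    by rewrite -(ler_pM2r hK) hy mulrAC.
  rewrite ler_pdivrMl ?ltr0n //.
Qed.
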